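(* For a given diagonal section $\delta$ we have $\mu_\delta=\mu(D_\delta)$, where $D_\delta(x,y)=\overline{C}_\delta(x,y)$ for $x\le y$ and $D_\delta(x,y)=B_\delta(x,y)$ for $x\ge y$.
   Context: A diagonal section is a function $\delta\colon[0,1]\to[0,1]$ that is the diagonal $x\mapsto C(x,x)$ of some bivariate copula $C$; equivalently $\delta(x)\le x$, $0\le\delta(y)-\delta(x)\le 2(y-x)$ for $x\le y$, and $\delta(1)=1$. Write $\widehat{\delta}(x)=x-\delta(x)$. $\overline{C}_\delta(x,y)=\sup\{C(x,y)\colon C \text{ a copula with diagonal section } \delta\}$, and $B_\delta(x,y)=\min\{x,y\}-\min_{t\in[\min\{x,y\},\max\{x,y\}]}\widehat{\delta}(t)$ is the Bertino copula. The function $D_\delta$ (diagonal splice of $\overline{C}_\delta$ and $B_\delta$) is a copula with diagonal section $\delta$. For a copula $C$, its asymmetry is $\mu(C)=\max\{|C(x,y)-C(y,x)|\colon x,y\in[0,1]\}$, and $\mu_\delta=\sup\{\mu(C)\colon C \text{ a copula with diagonal section } \delta\}$ is the maximal asymmetry of copulas with diagonal section $\delta$. *)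

(* Defs.v *)
From mathcomp Require Import all_boot all_order all_algebra.
From mathcomp Require Import all_classical all_reals.
Set Implicit Arguments. Unset Strict Implicit. Unset Printing Implicit Defensive.
Import Order.TTheory GRing.Theory Num.Theory.
Local Open Scope classical_set_scope.
Local Open Scope ring_scope.

Section CopulaDefs.
Variable R : realType.

Definition unit_I : set R := [set x | 0 <= x <= 1].

(* A bivariate copula, viewed as a function R -> R -> R whose values on
   [0,1]^2 are what matters: groundedness, uniform margins, 2-increasing. *)
Definition is_copula (C : R -> R -> R) : Prop :=
  (forall x, 0 <= x <= 1 -> C x 0 = 0 /\ C 0 x = 0 /\ C x 1 = x /\ C 1 x = x) /\
  (forall x1 x2 y1 y2, 0 <= x1 -> x1 <= x2 -> x2 <= 1 ->
      0 <= y1 -> y1 <= y2 -> y2 <= 1 ->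
      0 <= C x2 y2 - C x2 y1 - C x1 y2 + C x1 y1).

Definition has_diagonal (C : R -> R -> R) (delta : R -> R) : Prop :=
  forall x, 0 <= x <= 1 -> C x x = delta x.

Definition diagonal_section (delta : R -> R) : Prop :=
  exists C, is_copula C /\ has_diagonal C delta.

Definition copulas_with_diag (delta : R -> R) : set (R -> R -> R) :=
  [set C | is_copula C /\ has_diagonal C delta].

Definition delta_hat (delta : R -> R) (x : R) : R := x - delta x.

Definition Cbar (delta : R -> R) (x y : R) : R :=
  sup [set C x y | C in copulas_with_diag delta].

Definition Bertino (delta : R -> R) (x y : R) : R :=
  Num.min x y -
  inf [set delta_hat delta t | t in [set t | Num.min x y <= t <= Num.max x y]].

Definition Ddelta (delta : R -> R) (x y : R) : R :=
  if x <= y then Cbar delta x y else Bertino delta x y.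

Definition asym (C : R -> R -> R) : R :=
  sup [set `|C xy.1 xy.2 - C xy.2 xy.1| | xy in unit_I `*` unit_I].

Definition max_asym (delta : R -> R) : R :=
  sup [set asym C | C in copulas_with_diag delta].

End CopulaDefs.

(* Main.v *)
Require Import Defs.
From mathcomp Require Import all_boot all_order all_algebra.
From mathcomp Require Import all_classical all_reals.
From mathcomp Require Import lra.
Set Implicit Arguments. Unset Strict Implicit. Unset Printing Implicit Defensive.
Import Order.TTheory GRing.Theory Num.Theory.
Local Open Scope classical_set_scope.
Local Open Scope ring_scope.

Lemma cop_b (R : realType) (C : R -> R -> R) x : is_copula C -> 0 <= x -> x <= 1 ->
  C x 0 = 0 /\ C 0 x = 0 /\ C x 1 = x /\ C 1 x = x.
Proof. by move=> [hb _] h0 h1; apply: hb; rewrite h0 h1. Qed.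

Lemma cop_i (R : realType) (C : R -> R -> R) x1 x2 y1 y2 : is_copula C ->
  0 <= x1 -> x1 <= x2 -> x2 <= 1 -> 0 <= y1 -> y1 <= y2 -> y2 <= 1 ->
  0 <= C x2 y2 - C x2 y1 - C x1 y2 + C x1 y1.
Proof. by move=> [_ hi]; apply: hi. Qed.

Lemma cop_mono2 (R : realType) (C : R -> R -> R) x y1 y2 : is_copula C ->
  0 <= x -> x <= 1 -> 0 <= y1 -> y1 <= y2 -> y2 <= 1 -> C x y1 <= C x y2.
Proof.
move=> hC h0 h1 g0 g1 g2.
have := cop_i hC (lexx 0) h0 h1 g0 g1 g2.
have [_ [a _]] := cop_b hC g0 (le_trans g1 g2).
have [_ [b _]] := cop_b hC (le_trans g0 g1) g2.
rewrite a b; lra.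
Qed.

Lemma cop_mono1 (R : realType) (C : R -> R -> R) x1 x2 y : is_copula C ->
  0 <= x1 -> x1 <= x2 -> x2 <= 1 -> 0 <= y -> y <= 1 -> C x1 y <= C x2 y.
Proof.
move=> hC h0 h1 h2 g0 g1.
have := cop_i hC h0 h1 h2 (lexx 0) g0 g1.
have [a _] := cop_b hC h0 (le_trans h1 h2).
have [b _] := cop_b hC (le_trans h0 h1) h2.
rewrite a b; lra.
Qed.

Lemma cop_lip1 (R : realType) (C : R -> R -> R) x1 x2 y : is_copula C ->
  0 <= x1 -> x1 <= x2 -> x2 <= 1 -> 0 <= y -> y <= 1 -> C x2 y - C x1 y <= x2 - x1.
Proof.
move=> hC h0 h1 h2 g0 g1.
have := cop_i hC h0 h1 h2 g0 g1 (lexx 1).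
have [_ [_ [a _]]] := cop_b hC h0 (le_trans h1 h2).
have [_ [_ [b _]]] := cop_b hC (le_trans h0 h1) h2.
rewrite a b; lra.
Qed.

Lemma cop_lip2 (R : realType) (C : R -> R -> R) x y1 y2 : is_copula C ->
  0 <= x -> x <= 1 -> 0 <= y1 -> y1 <= y2 -> y2 <= 1 -> C x y2 - C x y1 <= y2 - y1.
Proof.
move=> hC h0 h1 g0 g1 g2.
have := cop_i hC h0 h1 (lexx 1) g0 g1 g2.
have [_ [_ [_ a]]] := cop_b hC g0 (le_trans g1 g2).
have [_ [_ [_ b]]] := cop_b hC (le_trans g0 g1) g2.
rewrite a b; lra.
Qed.

Lemma cop_range (R : realType) (C : R -> R -> R) x y : is_copula C ->
  0 <= x -> x <= 1 -> 0 <= y -> y <= 1 -> 0 <= C x y /\ C x y <= x /\ C x y <= y.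
Proof.
move=> hC h0 h1 g0 g1.
have m1 := cop_mono2 hC h0 h1 (lexx 0) g0 g1.
have m2 := cop_mono2 hC h0 h1 g0 g1 (lexx 1).
have m3 := cop_mono1 hC h0 h1 (lexx 1) g0 g1.
have [a [_ [b _]]] := cop_b hC h0 h1.
have [_ [_ [_ c]]] := cop_b hC g0 g1.
rewrite a in m1; rewrite b in m2; rewrite c in m3; lra.
Qed.

Lemma cop_T (R : realType) (C : R -> R -> R) : is_copula C -> is_copula (fun x y => C y x).
Proof.
move=> hC; split.
  move=> x /andP[h0 h1]; have [a [b [c d]]] := cop_b hC h0 h1; by [].
move=> x1 x2 y1 y2 h0 h1 h2 g0 g1 g2 /=.
have := cop_i hC g0 g1 g2 h0 h1 h2; lra.
Qed.

Definition hset (R : realType) (delta : R -> R) a b :=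
  [set delta_hat delta t | t in [set t | a <= t <= b]].
Definition mm (R : realType) (delta : R -> R) a b := inf (hset delta a b).

Lemma dh_bnd (R : realType) (C : R -> R -> R) delta t : is_copula C -> has_diagonal C delta ->
  0 <= t -> t <= 1 -> 0 <= delta_hat delta t /\ delta_hat delta t <= t.
Proof.
move=> hC hd h0 h1; rewrite /delta_hat -hd ?h0 ?h1 //.
have := cop_range hC h0 h1 h0 h1; lra.
Qed.

Lemma mm_le (R : realType) (C : R -> R -> R) delta a b t : is_copula C -> has_diagonal C delta ->
  0 <= a -> b <= 1 -> a <= t -> t <= b -> mm delta a b <= delta_hat delta t.
Proof.
move=> hC hd ha hb h1 h2.
have hl : has_lbound (hset delta a b).
  exists 0 => _ [s /andP[s1 s2] <-].
  by have [] := dh_bnd hC hd (le_trans ha s1) (le_trans s2 hb).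
apply: (ge_inf hl); exists t => //; by rewrite /= h1 h2.
Qed.

Lemma mm_ge (R : realType) delta (a b z : R) : a <= b ->
  (forall t, a <= t -> t <= b -> z <= delta_hat delta t) -> z <= mm delta a b.
Proof.
move=> hab H; apply: lb_le_inf; first by exists (delta_hat delta a), a => //=; rewrite lexx hab.
by move=> _ [s /andP[s1 s2] <-]; apply: H.
Qed.

Lemma mm_ge0 (R : realType) (C : R -> R -> R) delta a b : is_copula C -> has_diagonal C delta ->
  0 <= a -> a <= b -> b <= 1 -> 0 <= mm delta a b.
Proof.
move=> hC hd ha hab hb; apply: mm_ge => // t h1 h2.
by have [] := dh_bnd hC hd (le_trans ha h1) (le_trans h2 hb).
Qed.

Lemma mm_le1 (R : realType) (C : R -> R -> R) delta a b : is_copula C -> has_diagonal C delta ->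
  0 <= a -> a <= b -> b <= 1 -> mm delta a b <= 1.
Proof.
move=> hC hd ha hab hb; apply: (le_trans (mm_le hC hd ha hb (lexx a) hab)).
have [] := dh_bnd hC hd ha (le_trans hab hb); lra.
Qed.

Lemma B_up (R : realType) delta (x y : R) : x <= y -> Bertino delta x y = x - mm delta x y.
Proof. by move=> h; rewrite /Bertino min_l // max_r. Qed.

Lemma B_sym (R : realType) delta (x y : R) : Bertino delta x y = Bertino delta y x.
Proof. by rewrite /Bertino minC maxC. Qed.

Lemma B_low (R : realType) delta (x y : R) : y <= x -> Bertino delta x y = y - mm delta y x.
Proof. by move=> h; rewrite B_sym B_up. Qed.

Lemma B_le_aux (R : realType) (C : R -> R -> R) delta u v : is_copula C -> has_diagonal C delta ->
  0 <= u -> u <= v -> v <= 1 -> u - mm delta u v <= C u v /\ u - mm delta u v <= C v u.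
Proof.
move=> hC hd h0 h1 h2; split.
  suff : u - C u v <= mm delta u v by lra.
  apply: mm_ge => // t t1 t2.
  have t0 : 0 <= t by apply: le_trans t1.
  have t3 : t <= 1 by apply: le_trans h2.
  have := cop_mono2 hC h0 (le_trans h1 h2) t0 t2 h2.
  have := cop_lip1 hC h0 t1 t3 t0 t3.
  rewrite /delta_hat -hd ?t0 ?t3 //; lra.
suff : u - C v u <= mm delta u v by lra.
apply: mm_ge => // t t1 t2.
have t0 : 0 <= t by apply: le_trans t1.
have t3 : t <= 1 by apply: le_trans h2.
have := cop_mono1 hC t0 t2 h2 h0 (le_trans h1 h2).
have := cop_lip2 hC t0 t3 h0 t1 t3.
rewrite /delta_hat -hd ?t0 ?t3 //; lra.
Qed.

Lemma B_le (R : realType) (C : R -> R -> R) delta x y : is_copula C -> has_diagonal C delta ->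
  0 <= x -> x <= 1 -> 0 <= y -> y <= 1 -> Bertino delta x y <= C x y.
Proof.
move=> hC hd h0 h1 g0 g1.
case: (leP x y) => hxy.
  rewrite B_up //; have [h _] := B_le_aux hC hd h0 hxy g1; exact: h.
rewrite B_low; last exact: ltW hxy. have [_ h] := B_le_aux hC hd g0 (ltW hxy) h1; exact: h.
Qed.

Lemma B_diag (R : realType) (C : R -> R -> R) delta u : is_copula C -> has_diagonal C delta ->
  0 <= u -> u <= 1 -> Bertino delta u u = delta u.
Proof.
move=> hC hd h0 h1; rewrite B_up //.
have e : mm delta u u = delta_hat delta u.
  apply: le_anti; rewrite (mm_le hC hd h0 h1 (lexx u) (lexx u)) /=.
  by apply: mm_ge => // t t1 t2; have -> : t = u by apply: le_anti; rewrite t1 t2.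
rewrite e /delta_hat; lra.
Qed.

Lemma B_bnd (R : realType) (C : R -> R -> R) delta x y : is_copula C -> has_diagonal C delta ->
  0 <= x -> x <= 1 -> 0 <= y -> y <= 1 -> -1 <= Bertino delta x y <= 1.
Proof.
move=> hC hd h0 h1 g0 g1.
wlog hxy : x y h0 h1 g0 g1 / x <= y.
  move=> W; case: (leP x y) => h; first exact: W.
  by rewrite B_sym; apply: W => //; apply: ltW.
rewrite B_up //.
have := mm_ge0 hC hd h0 hxy g1; have := mm_le1 hC hd h0 hxy g1.
move=> a b; apply/andP; split; lra.
Qed.

Lemma B_low2 (R : realType) (C : R -> R -> R) delta y1 y2 x1 x2 :
  is_copula C -> has_diagonal C delta ->
  0 <= y1 -> y1 <= y2 -> y2 <= x1 -> x1 <= x2 -> x2 <= 1 ->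
  0 <= Bertino delta x2 y2 - Bertino delta x2 y1 - Bertino delta x1 y2 + Bertino delta x1 y1.
Proof.
move=> hC hd h0 h1 h2 h3 h4.
rewrite !B_low //; try lra.
have H1 : forall z, z <= mm delta y1 x1 -> z <= mm delta y2 x2 -> z <= mm delta y1 x2.
  move=> z z1 z2; apply: mm_ge; first lra.
  move=> t t1 t2; case: (leP t x1) => ht.
    by apply: le_trans z1 _; apply: (mm_le hC hd) => //; lra.
  by apply: le_trans z2 _; apply: (mm_le hC hd) => //; lra.
have H2 : mm delta y1 x1 <= mm delta y2 x1.
  by apply: mm_ge => // t t1 t2; apply: (mm_le hC hd) => //; lra.
have H3 : mm delta y2 x2 <= mm delta y2 x1.
  by apply: mm_ge => // t t1 t2; apply: (mm_le hC hd) => //; lra.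
case: (leP (mm delta y1 x1) (mm delta y2 x2)) => hm.
  have := H1 _ (lexx _) hm; lra.
have := H1 _ (ltW hm) (lexx _); lra.
Qed.

Definition splice (R : realType) (C : R -> R -> R) delta (u v : R) :=
  if u <= v then C u v else Bertino delta u v.

Lemma S_up (R : realType) (C : R -> R -> R) delta (u v : R) : u <= v -> splice C delta u v = C u v.
Proof. by rewrite /splice => ->. Qed.

Lemma S_low (R : realType) (C : R -> R -> R) delta (u v : R) : is_copula C -> has_diagonal C delta ->
  0 <= v -> v <= u -> u <= 1 -> splice C delta u v = Bertino delta u v.
Proof.
move=> hC hd h0 h1 h2; rewrite /splice; case: ifP => // h.
have e : u = v by apply: le_anti; rewrite h h1.
rewrite e hd ?(B_diag hC hd) //; try lra.
Qed.

Lemma S_rect (R : realType) (C : R -> R -> R) delta a b c d : is_copula C -> has_diagonal C delta ->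
  0 <= a -> a <= b -> b <= 1 -> 0 <= c -> c <= d -> d <= 1 ->
  (b <= c \/ d <= a \/ (a = c /\ b = d)) ->
  0 <= splice C delta b d - splice C delta b c - splice C delta a d + splice C delta a c.
Proof.
move=> hC hd h0 h1 h2 g0 g1 g2 [H|[H|[e1 e2]]].
- rewrite !S_up; try lra. exact: cop_i.
- rewrite !(S_low hC hd); try lra. exact: (B_low2 hC hd).
- subst c d.
  rewrite (S_up _ _ (lexx b)) (S_up _ _ (lexx a)) (S_up _ _ h1) (S_low hC hd) //.
  have := B_le hC hd (le_trans h0 h1) h2 h0 (le_trans h1 h2).
  have := cop_i hC h0 h1 h2 h0 h1 h2.
  rewrite !hd ?h0 ?h2 ?(le_trans h0 h1) ?(le_trans h1 h2) //; lra.
Qed.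

Lemma S_9 (R : realType) (C : R -> R -> R) delta x1 x2 y1 y2 p q : is_copula C -> has_diagonal C delta ->
  0 <= x1 -> x1 <= x2 -> x2 <= 1 -> 0 <= y1 -> y1 <= y2 -> y2 <= 1 ->
  x1 <= p -> y1 <= p -> (p = x1 \/ p = y1) -> q <= x2 -> q <= y2 -> (q = x2 \/ q = y2) -> p <= q ->
  0 <= splice C delta x2 y2 - splice C delta x2 y1 - splice C delta x1 y2 + splice C delta x1 y1.
Proof.
move=> hC hd h0 h1 h2 g0 g1 g2 p1 p2 p3 q1 q2 q3 pq.
have r1 : 0 <= splice C delta p p - splice C delta p y1 - splice C delta x1 p + splice C delta x1 y1.
  apply: S_rect => //; lra.
have r2 := S_rect hC hd h0 p1 (le_trans pq (le_trans q1 h2)) (le_trans g0 p2) pq (le_trans q2 g2) (or_introl (lexx p)).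
have r3 := S_rect hC hd h0 p1 (le_trans pq (le_trans q1 h2)) (le_trans (le_trans g0 p2) pq) q2 g2 (or_introl pq).
have r4 : 0 <= splice C delta q p - splice C delta q y1 - splice C delta p p + splice C delta p y1.
  apply: S_rect => //; lra.
have r5 : 0 <= splice C delta q q - splice C delta q p - splice C delta p q + splice C delta p p.
  apply: S_rect => //; lra.
have r6 : 0 <= splice C delta q y2 - splice C delta q q - splice C delta p y2 + splice C delta p q.
  apply: S_rect => //; lra.
have r7 : 0 <= splice C delta x2 p - splice C delta x2 y1 - splice C delta q p + splice C delta q y1.
  apply: S_rect => //; lra.
have r8 : 0 <= splice C delta x2 q - splice C delta x2 p - splice C delta q q + splice C delta q p.
  apply: S_rect => //; lra.
have r9 : 0 <= splice C delta x2 y2 - splice C delta x2 q - splice C delta q y2 + splice C delta q q.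
  apply: S_rect => //; lra.
lra.
Qed.

Lemma S_cop (R : realType) (C : R -> R -> R) delta : is_copula C -> has_diagonal C delta ->
  is_copula (splice C delta) /\ has_diagonal (splice C delta) delta.
Proof.
move=> hC hd; split; last first.
  by move=> x hx; rewrite S_up // hd.
split.
  move=> x /andP[h0 h1].
  have [a [b [c d]]] := cop_b hC h0 h1.
  have d0 : delta_hat delta 0 = 0.
    have [] := dh_bnd hC hd (lexx 0) ler01; lra.
  have d1 : delta_hat delta 1 = 0.
    rewrite /delta_hat -hd ?lexx ?ler01 //.
    by have [_ [_ [_ ->]]] := cop_b hC ler01 (lexx 1); rewrite subrr.
  split.
    rewrite S_low // B_low //.
    suff : mm delta 0 x = 0 by move=> ->; rewrite subrr.
    apply: le_anti; rewrite (mm_ge0 hC hd) // andbT.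
    by rewrite -[X in _ <= X]d0; apply: (mm_le hC hd).
  split; first by rewrite S_up.
  split; first by rewrite S_up.
  rewrite S_low // ?ler01 // B_low //.
  suff : mm delta x 1 = 0 by move=> ->; rewrite subr0.
  apply: le_anti; rewrite (mm_ge0 hC hd) // andbT.
  by rewrite -[X in _ <= X]d1; apply: (mm_le hC hd).
move=> x1 x2 y1 y2 h0 h1 h2 g0 g1 g2.
case: (leP x2 y1) => c1.
  by apply: S_rect => //; left.
case: (leP y2 x1) => c2.
  by apply: S_rect => //; right; left.
case: (leP x1 y1) => d1; case: (leP x2 y2) => d2.
- apply: (S_9 (p:=y1) (q:=x2)) => //; try lra; by [right|left].
- apply: (S_9 (p:=y1) (q:=y2)) => //; try lra; by [right|right].
- apply: (S_9 (p:=x1) (q:=x2)) => //; try lra; by [left|left].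
- apply: (S_9 (p:=x1) (q:=y2)) => //; try lra; by [left|right].
Qed.

Lemma unitI_pair (R : realType) (x y : R) : 0 <= x -> x <= 1 -> 0 <= y -> y <= 1 ->
  (@unit_I R `*` @unit_I R) (x, y).
Proof. by move=> a b c d; split; rewrite /unit_I /= ?a ?b ?c ?d. Qed.

Lemma asym_ge (R : realType) (C : R -> R -> R) K x y :
  (forall xy, (@unit_I R `*` @unit_I R) xy -> `|C xy.1 xy.2 - C xy.2 xy.1| <= K) ->
  0 <= x -> x <= 1 -> 0 <= y -> y <= 1 -> `|C x y - C y x| <= asym C.
Proof.
move=> H a b c d; apply: ub_le_sup.
  by exists K => _ [xy hxy <-]; apply: H.
by exists (x, y) => //; apply: unitI_pair.
Qed.

Lemma asym_le (R : realType) (C : R -> R -> R) K :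
  (forall xy, (@unit_I R `*` @unit_I R) xy -> `|C xy.1 xy.2 - C xy.2 xy.1| <= K) -> asym C <= K.
Proof.
move=> H; apply: ge_sup.
  by exists `|C 0 0 - C 0 0|, (0, 0) => //; apply: unitI_pair; rewrite ?lexx ?ler01.
by move=> _ [xy hxy <-]; apply: H.
Qed.

Lemma cop_ab (R : realType) (C : R -> R -> R) : is_copula C ->
  forall xy, (@unit_I R `*` @unit_I R) xy -> `|C xy.1 xy.2 - C xy.2 xy.1| <= 1.
Proof.
move=> hC [x y] [/andP[a b] /andP[c d]] /=.
have := cop_range hC a b c d; have := cop_range hC c d a b.
move=> u v; rewrite ler_norml; apply/andP; split; lra.
Qed.

Lemma cop_asym0 (R : realType) (C : R -> R -> R) : is_copula C -> 0 <= asym C.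
Proof.
move=> hC; have := asym_ge (cop_ab hC) (lexx 0) ler01 (lexx 0) ler01.
by rewrite subrr normr0.
Qed.

Section Main.

Lemma Cbar_ge (R : realType) (C : R -> R -> R) delta x y :
  is_copula C -> has_diagonal C delta -> 0 <= x -> x <= 1 -> 0 <= y -> y <= 1 ->
  C x y <= Cbar delta x y.
Proof.
move=> hC hd a b c d; apply: ub_le_sup; last by exists C.
exists 1 => _ [C' [hC' _] <-].
by have := cop_range hC' a b c d; lra.
Qed.

Lemma Cbar_le (R : realType) delta (x y K : R) :
  copulas_with_diag delta !=set0 ->
  (forall C, is_copula C -> has_diagonal C delta -> C x y <= K) -> Cbar delta x y <= K.
Proof.
move=> [C0 h0] H; apply: ge_sup; first by exists (C0 x y), C0.
by move=> _ [C [hC hd] <-]; apply: H.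
Qed.

Lemma max_asym_ge (R : realType) (C : R -> R -> R) delta :
  is_copula C -> has_diagonal C delta -> asym C <= max_asym delta.
Proof.
move=> hC hd; apply: ub_le_sup; last by exists C.
exists 1 => _ [C' [hC' _] <-]; exact: asym_le (cop_ab hC').
Qed.

Lemma D_bnd (R : realType) (C0 : R -> R -> R) delta x y :
  is_copula C0 -> has_diagonal C0 delta -> 0 <= x -> x <= 1 -> 0 <= y -> y <= 1 ->
  -1 <= Ddelta delta x y <= 1.
Proof.
move=> hC hd a b c d; rewrite /Ddelta; case: ifP => _; last exact: (B_bnd hC hd).
have := Cbar_ge hC hd a b c d.
have : Cbar delta x y <= 1.
  apply: Cbar_le; first by exists C0.
  by move=> C hC' _; have := cop_range hC' a b c d; lra.
have := cop_range hC a b c d.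
move=> u v w; apply/andP; split; lra.
Qed.

Lemma key1 (R : realType) (C0 C : R -> R -> R) delta x y :
  is_copula C0 -> has_diagonal C0 delta ->
  is_copula C -> has_diagonal C delta -> 0 <= x -> x < y -> y <= 1 ->
  `|C x y - C y x| <= `|Ddelta delta x y - Ddelta delta y x|.
Proof.
move=> hC0 hd0 hC hd a b c.
have b' := ltW b.
have Dxy : Ddelta delta x y = Cbar delta x y by rewrite /Ddelta b'.
have Dyx : Ddelta delta y x = Bertino delta x y by rewrite /Ddelta (lt_geF b) B_sym.
rewrite Dxy Dyx.
have e1 := Cbar_ge hC hd a (le_trans b' c) (le_trans a b') c.
have e2 := Cbar_ge (cop_T hC) hd a (le_trans b' c) (le_trans a b') c.
have e3 := B_le hC hd a (le_trans b' c) (le_trans a b') c.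
have e4 := B_le (cop_T hC) hd a (le_trans b' c) (le_trans a b') c.
rewrite /= in e2 e4.
apply: le_trans (ler_norm _).
rewrite ler_norml; apply/andP; split; lra.
Qed.

Lemma key2 (R : realType) (C0 : R -> R -> R) delta x y :
  is_copula C0 -> has_diagonal C0 delta -> 0 <= x -> x < y -> y <= 1 ->
  `|Ddelta delta x y - Ddelta delta y x| <= max_asym delta.
Proof.
move=> hC0 hd0 a b c.
have b' := ltW b.
have x1 := le_trans b' c. have y0 := le_trans a b'.
have Dxy : Ddelta delta x y = Cbar delta x y by rewrite /Ddelta b'.
have Dyx : Ddelta delta y x = Bertino delta x y by rewrite /Ddelta (lt_geF b) B_sym.
rewrite Dxy Dyx.
have m0 : 0 <= max_asym delta.
  exact: le_trans (cop_asym0 hC0) (max_asym_ge hC0 hd0).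
have l1 := Cbar_ge hC0 hd0 a x1 y0 c.
have l2 := B_le hC0 hd0 a x1 y0 c.
have u1 : Cbar delta x y <= max_asym delta + Bertino delta x y.
  apply: Cbar_le; first by exists C0.
  move=> C1 hC1 hd1.
  have [hS hdS] := S_cop hC1 hd1.
  have := max_asym_ge hS hdS.
  have := asym_ge (cop_ab hS) a x1 y0 c.
  rewrite S_up // (S_low hC1 hd1) // B_sym.
  have := ler_norm (C1 x y - Bertino delta x y).
  lra.
rewrite ler_norml; apply/andP; split; lra.
Qed.

End Main.

Theorem corollary4p4 (R : realType) (delta : R -> R) :
  diagonal_section delta -> max_asym delta = asym (Ddelta delta).
Proof.
move=> [C0 [hC0 hd0]].
have hub : forall xy, (@unit_I R `*` @unit_I R) xy ->
    `|Ddelta delta xy.1 xy.2 - Ddelta delta xy.2 xy.1| <= 2.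
  move=> [x y] [/andP[a b] /andP[c d]] /=.
  have := D_bnd hC0 hd0 a b c d; have := D_bnd hC0 hd0 c d a b.
  move=> /andP[u1 u2] /andP[v1 v2].
  rewrite ler_norml; apply/andP; split; lra.
apply: le_anti; apply/andP; split.
  apply: ge_sup; first by exists (asym C0), C0.
  move=> _ [C [hC hd] <-]; apply: asym_le => -[x y] [/andP[a b] /andP[c d]] /=.
  apply: le_trans (asym_ge hub a b c d).
  case: (ltgtP x y) => h.
  - exact: (key1 hC0 hd0 hC hd).
  - by rewrite distrC [X in _ <= X]distrC; apply: (key1 hC0 hd0 hC hd).
  - by rewrite h !subrr normr0.
apply: asym_le => -[x y] [/andP[a b] /andP[c d]] /=.
case: (ltgtP x y) => h.
- exact: (key2 hC0 hd0).
- by rewrite distrC; apply: (key2 hC0 hd0).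
- rewrite h subrr normr0.
  exact: le_trans (cop_asym0 hC0) (max_asym_ge hC0 hd0).
Qed.
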